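(* Consider the discrete-time, time-varying affine system $$x(t+1)=A(t)x(t)+B(t)u(t)+s+w(t),\qquad t=0,\dots,T-1,$$ with $x(t)\in\mathbb{R}^n$, $u(t)\in\mathbb{R}^m$, $s\in\mathbb{R}^n$, under an affine (causal, time-varying) state-feedback policy $\mathbf{u}=\mathbf{K}\mathbf{x}+\mathbf{u_s}$, where $\mathbf{K}\in\mathbb{R}^{m(T+1)\times n(T+1)}$ is block lower triangular (blocks of size $m\times n$) and $\mathbf{u_s}\in\mathbb{R}^{m(T+1)}$. Define $$\boldsymbol{\Phi_x}=(I-\mathcal{Z}\mathcal{A}-\mathcal{Z}\mathcal{B}\mathbf{K})^{-1},\quad \boldsymbol{\phi_x}=\boldsymbol{\Phi_x}\mathcal{Z}(\mathcal{B}\mathbf{u_s}+\mathbf{s}),$$ $$\boldsymbol{\Phi_u}=\mathbf{K}(I-\mathcal{Z}\mathcal{A}-\mathcal{Z}\mathcal{B}\mathbf{K})^{-1},\quad \boldsymbol{\phi_u}=\boldsymbol{\Phi_u}\mathcal{Z}(\mathcal{B}\mathbf{u_s}+\mathbf{s})+\mathbf{u_s},$$ where $I=I_{n(T+1)}$ (the inverse exists since $I-\mathcal{Z}\mathcal{A}-\mathcal{Z}\mathcal{B}\mathbf{K}$ is block lower triangular with identity diagonal blocks). Then the closed-loop trajectories satisfy $\mathbf{x}=\boldsymbol{\Phi_x}\mathbf{w}+\boldsymbol{\phi_x}$, $\mathbf{u}=\boldsymbol{\Phi_u}\mathbf{w}+\boldsymbol{\phi_u}$, and: 1. The quadruple $\{\boldsymbol{\Phi_x},\boldsymbol{\phi_x},\boldsymbol{\Phi_u},\boldsymbol{\phi_u}\}$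 satisfies the affine constraint $$\begin{bmatrix} I-\mathcal{Z}\mathcal{A} & -\mathcal{Z}\mathcal{B}\end{bmatrix}\begin{bmatrix}\boldsymbol{\Phi_x} & \boldsymbol{\phi_x}\\ \boldsymbol{\Phi_u} & \boldsymbol{\phi_u}\end{bmatrix}=\begin{bmatrix} I & \mathcal{Z}\mathbf{s}\end{bmatrix}.\qquad (\star)$$ 2. Conversely, for any $\boldsymbol{\Phi_x}\in\mathbb{R}^{n(T+1)\times n(T+1)}$, $\boldsymbol{\Phi_u}\in\mathbb{R}^{m(T+1)\times n(T+1)}$ block lower triangular, and any $\boldsymbol{\phi_x}\in\mathbb{R}^{n(T+1)}$, $\boldsymbol{\phi_u}\in\mathbb{R}^{m(T+1)}$ satisfying $(\star)$, the matrix $\boldsymbol{\Phi_x}$ is invertible, and the affine policy $\mathbf{u}=\mathbf{K}\mathbf{x}+\mathbf{u_s}$ with $\mathbf{K}=\boldsymbol{\Phi_u}\boldsymbol{\Phi_x}^{-1}$ and $\mathbf{u_s}=\boldsymbol{\phi_u}-\boldsymbol{\Phi_u}\boldsymbol{\Phi_x}^{-1}\boldsymbol{\phi_x}$ achieves exactly these maps, i.e. $(I-\mathcal{Z}\mathcal{A}-\mathcal{Z}\mathcal{B}\mathbf{K})^{-1}=\boldsymbol{\Phi_x}$, $\mathbf{K}(I-\mathcal{Z}\mathcal{A}-\mathcal{Z}\mathcal{B}\mathbf{K})^{-1}=\boldsymbol{\Phi_u}$, $\boldsymbol{\Phi_x}\mathcal{Z}(\mathcal{B}\mathbf{u_s}+\mathbf{s})=\boldsymbol{\phi_x}$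 and $\boldsymbol{\Phi_u}\mathcal{Z}(\mathcal{B}\mathbf{u_s}+\mathbf{s})+\mathbf{u_s}=\boldsymbol{\phi_u}$.
   Context: Signals over the horizon are stacked: $\mathbf{x}=[x_0^\top,\dots,x_T^\top]^\top\in\mathbb{R}^{n(T+1)}$, $\mathbf{u}=[u_0^\top,\dots,u_T^\top]^\top\in\mathbb{R}^{m(T+1)}$, $\mathbf{w}=[x(0)^\top,w(0)^\top,\dots,w(T-1)^\top]^\top\in\mathbb{R}^{n(T+1)}$ (initial state followed by disturbances), and $\mathbf{s}=[s^\top,\dots,s^\top,\mathbf{0}_n^\top]^\top\in\mathbb{R}^{n(T+1)}$ ($T$ copies of $s$ followed by a zero block). $\mathcal{A}=\mathrm{diag}(A(0),\dots,A(T-1),\mathbf{0}_{n\times n})$ and $\mathcal{B}=\mathrm{diag}(B(0),\dots,B(T-1),\mathbf{0}_{n\times m})$ are block-diagonal. $\mathcal{Z}\in\mathbb{R}^{n(T+1)\times n(T+1)}$ is the block-downshift operator: identity blocks $I_n$ on the first block subdiagonal and zeros elsewhere. With this notation the dynamics over the horizon read $\mathbf{x}=\mathcal{Z}\mathcal{A}\mathbf{x}+\mathcal{Z}\mathcal{B}\mathbf{u}+\mathcal{Z}\mathbf{s}+\mathbf{w}$. *)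

(* Defs.v *)
From HB Require Import structures.
From mathcomp Require Import all_boot all_order all_algebra.
Set Implicit Arguments. Unset Strict Implicit. Unset Printing Implicit Defensive.
Import Order.TTheory GRing.Theory Num.Theory.
Local Open Scope ring_scope.

(* Stacked signals over horizon 0..T: an index i : 'I_(p * T.+1) of a
   vector in R^{p(T+1)} lives in block (time) i %/ p at position i %% p. *)

Lemma blk_pos_lt (p k : nat) (i : 'I_(p * k)) : (i %% p < p)%N.
Proof.
case: p i => [|p] i; last by rewrite ltn_pmod.
by case: i => /= i; rewrite mul0n.
Qed.

Definition blk (p k : nat) (i : 'I_(p * k)) : nat := (i %/ p)%N.
Definition pos (p k : nat) (i : 'I_(p * k)) : 'I_p := Ordinal (blk_pos_lt i).

Section Stacked.
Variables (R : fieldType) (n m T : nat).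

Definition Zop : 'M[R]_(n * T.+1) :=
  \matrix_(i, j) ((blk i == (blk j).+1) && (pos i == pos j))%:R.

Definition calA (A : nat -> 'M[R]_n) : 'M[R]_(n * T.+1) :=
  \matrix_(i, j) (if (blk i == blk j) && (blk i < T)%N
                  then A (blk i) (pos i) (pos j) else 0).

Definition calB (B : nat -> 'M[R]_(n, m)) : 'M[R]_(n * T.+1, m * T.+1) :=
  \matrix_(i, j) (if (blk i == blk j) && (blk i < T)%N
                  then B (blk i) (pos i) (pos j) else 0).

Definition sbf (s : 'cV[R]_n) : 'cV[R]_(n * T.+1) :=
  \col_i (if (blk i < T)%N then s (pos i) 0 else 0).
End Stacked.

Definition blk_lower_tri (R : fieldType) (p q k : nat)
  (M : 'M[R]_(p * k, q * k)) : Prop :=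
  forall i j, (blk i < blk j)%N -> M i j = 0.

(* Main.v *)
Require Import Defs.
From HB Require Import structures.
From mathcomp Require Import all_boot all_order all_algebra.
Import Order.TTheory GRing.Theory Num.Theory.
Set Implicit Arguments. Unset Strict Implicit. Unset Printing Implicit Defensive.
Local Open Scope ring_scope.

Definition slow (R : fieldType) (p q k : nat) (M : 'M[R]_(p * k, q * k)) : Prop :=
  forall i j, (blk i <= blk j)%N -> M i j = 0.

Section L.
Variable R : fieldType.

Lemma mul_low p q r k (X : 'M[R]_(p*k,q*k)) (Y : 'M[R]_(q*k,r*k)) :
  blk_lower_tri X -> blk_lower_tri Y -> blk_lower_tri (X *m Y).
Proof.
move=> hX hY i j hij; rewrite mxE big1 // => l _.
case: (ltnP (blk i) (blk l)) => h; first by rewrite hX ?mul0r.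
by rewrite hY ?mulr0 //; apply: leq_ltn_trans h hij.
Qed.

Lemma mul_slow_low p q r k (X : 'M[R]_(p*k,q*k)) (Y : 'M[R]_(q*k,r*k)) :
  slow X -> blk_lower_tri Y -> slow (X *m Y).
Proof.
move=> hX hY i j hij; rewrite mxE big1 // => l _.
case: (leqP (blk i) (blk l)) => h; first by rewrite hX ?mul0r.
by rewrite hY ?mulr0 //; apply: leq_trans hij; exact: h.
Qed.

Lemma mul_low_slow p q r k (X : 'M[R]_(p*k,q*k)) (Y : 'M[R]_(q*k,r*k)) :
  blk_lower_tri X -> slow Y -> slow (X *m Y).
Proof.
move=> hX hY i j hij; rewrite mxE big1 // => l _.
case: (ltnP (blk i) (blk l)) => h; first by rewrite hX ?mul0r.
by rewrite hY ?mulr0 //; apply: leq_trans h hij.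
Qed.

Lemma add_low p q k (X Y : 'M[R]_(p*k,q*k)) :
  blk_lower_tri X -> blk_lower_tri Y -> blk_lower_tri (X + Y).
Proof. by move=> hX hY i j h; rewrite mxE hX ?hY ?addr0. Qed.

Lemma add_slow p q k (X Y : 'M[R]_(p*k,q*k)) :
  slow X -> slow Y -> slow (X + Y).
Proof. by move=> hX hY i j h; rewrite mxE hX ?hY ?addr0. Qed.

Lemma opp_slow p q k (X : 'M[R]_(p*k,q*k)) : slow X -> slow (- X).
Proof. by move=> hX i j h; rewrite mxE hX ?oppr0. Qed.

Lemma slow_low p q k (X : 'M[R]_(p*k,q*k)) : slow X -> blk_lower_tri X.
Proof. by move=> hX i j h; rewrite hX // ltnW. Qed.

Lemma one_low p k : blk_lower_tri (1%:M : 'M[R]_(p*k)).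
Proof. by move=> i j h; rewrite mxE; case: eqP => // e; rewrite e ltnn in h. Qed.

Lemma zero_low p q k : blk_lower_tri (0 : 'M[R]_(p*k,q*k)).
Proof. by move=> i j h; rewrite mxE. Qed.

Definition pw p k (N : 'M[R]_(p*k)) e := iter e (mulmx N) 1%:M.

Lemma pw_low p k (N : 'M[R]_(p*k)) e : blk_lower_tri N -> blk_lower_tri (pw N e).
Proof.
move=> hN; elim: e => [|e IH] /=; first exact: one_low.
exact: mul_low.
Qed.

Lemma pw_zero p k (N : 'M[R]_(p*k)) e : slow N ->
  forall i j, (blk i < blk j + e)%N -> pw N e i j = 0.
Proof.
move=> hN; elim: e => [|e IH] i j /=.
  rewrite addn0 => h; rewrite mxE; case: eqP => // E; by rewrite E ltnn in h.
move=> h; rewrite mxE big1 // => l _.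
case: (leqP (blk i) (blk l)) => h1; first by rewrite hN ?mul0r.
rewrite IH ?mulr0 //.
by rewrite addnS in h; apply: leq_trans h1 _; rewrite -ltnS.
Qed.

Lemma blk_lt p k (i : 'I_(p*k)) : (blk i < k)%N.
Proof.
rewrite /blk; case: p i => [|p] i; first by case: i => i; rewrite mul0n.
by rewrite ltn_divLR // [(k * _)%N]mulnC.
Qed.

Lemma pw_k p k (N : 'M[R]_(p*k)) : slow N -> pw N k = 0.
Proof.
move=> hN; apply/matrixP => i j; rewrite mxE pw_zero //.
exact: leq_trans (blk_lt i) (leq_addl _ _).
Qed.

Lemma geom p k (N : 'M[R]_(p*k)) e :
  (1%:M - N) *m (\sum_(f < e) pw N f) = 1%:M - pw N e.
Proof.
elim: e => [|e IH]; first by rewrite big_ord0 mulmx0 /= subrr.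
rewrite big_ord_recr /= mulmxDr IH mulmxBl mul1mx.
by rewrite addrA subrK.
Qed.

Lemma inv_slow p k (N : 'M[R]_(p*k)) : slow N ->
  (1%:M - N) \in unitmx /\ blk_lower_tri (invmx (1%:M - N)).
Proof.
move=> hN.
have E : (1%:M - N) *m (\sum_(f < k) pw N f) = 1%:M by rewrite geom pw_k // subr0.
have [U _] := mulmx1_unit E; split => //.
have -> : invmx (1%:M - N) = \sum_(f < k) pw N f.
  by rewrite -[RHS](mulKmx U) E mulmx1.
apply: (big_ind (@blk_lower_tri R p p k)); [exact: zero_low|exact: add_low|].
by move=> f _; apply: pw_low; apply: slow_low.
Qed.
End L.
Unset Implicit Arguments.

Lemma Z_slow (R : fieldType) n T : slow (Zop R n T).
Proof.
move=> i j h; rewrite mxE.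
case: eqP => //= E; by rewrite E ltnn in h.
Qed.

Lemma cA_low (R : fieldType) n T (A : nat -> 'M[R]_n) : blk_lower_tri (calA T A).
Proof. move=> i j h; rewrite mxE; case: eqP => //= E; by rewrite E ltnn in h. Qed.

Lemma cB_low (R : fieldType) n m T (B : nat -> 'M[R]_(n,m)) : blk_lower_tri (calB T B).
Proof. move=> i j h; rewrite mxE; case: eqP => //= E; by rewrite E ltnn in h. Qed.

Lemma one_is (R : fieldType) k : (1 : 'M[R]_k) = 1%:M.
Proof. by []. Qed.

Lemma hz (V:zmodType)(a b c d w:V): a + (b + (c + (d + (w + (-a - b))))) = w + (c + d).
Proof.
rewrite -opprD (addrA d) (addrA c) (addrA c) (addrA b) (addrA a).
rewrite (addrA a b) addrAC subrr add0r addrC //.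
Qed.

Lemma hz2 (V:zmodType)(x a b:V): x - a - b + (a + b) = x.
Proof. by rewrite -[x - a - b]addrA -opprD subrK. Qed.

Lemma hz3 (V:zmodType)(p q r:V): p - q = r - q + (p + - r).
Proof. by rewrite [RHS]addrC addrA subrK. Qed.

Theorem theorem1 (R : realFieldType) (n m T : nat)
    (A : nat -> 'M[R]_n) (B : nat -> 'M[R]_(n, m)) (s : 'cV[R]_n) :
  let Z := Zop R n T in
  let cA := calA T A in
  let cB := calB T B in
  let sb := sbf T s in
  (* Part 1 : from an affine causal policy to the closed-loop maps *)
  (forall (K : 'M[R]_(m * T.+1, n * T.+1)) (us : 'cV[R]_(m * T.+1)),
    blk_lower_tri K ->
    let M := 1 - Z *m cA - Z *m cB *m K in
    let Phix := invmx M in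
    let phix := Phix *m Z *m (cB *m us + sb) in
    let Phiu := K *m invmx M in
    let phiu := Phiu *m Z *m (cB *m us + sb) + us in
    [/\ M \in unitmx,
        (forall (w x : 'cV[R]_(n * T.+1)) (u : 'cV[R]_(m * T.+1)),
           x = Z *m cA *m x + Z *m cB *m u + Z *m sb + w ->
           u = K *m x + us ->
           x = Phix *m w + phix /\ u = Phiu *m w + phiu) &
        row_mx (1 - Z *m cA) (- (Z *m cB)) *m
          col_mx (row_mx Phix phix) (row_mx Phiu phiu)
        = row_mx (1%:M) (Z *m sb)]) /\
  (* Part 2 : converse *)
  (forall (Phix : 'M[R]_(n * T.+1)) (Phiu : 'M[R]_(m * T.+1, n * T.+1))
          (phix : 'cV[R]_(n * T.+1)) (phiu : 'cV[R]_(m * T.+1)),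
    blk_lower_tri Phix -> blk_lower_tri Phiu ->
    row_mx (1 - Z *m cA) (- (Z *m cB)) *m
      col_mx (row_mx Phix phix) (row_mx Phiu phiu)
      = row_mx (1%:M) (Z *m sb) ->
    Phix \in unitmx /\
    let K := Phiu *m invmx Phix in
    let us := phiu - Phiu *m invmx Phix *m phix in
    let M := 1 - Z *m cA - Z *m cB *m K in
    [/\ blk_lower_tri K,
        invmx M = Phix,
        K *m invmx M = Phiu,
        Phix *m Z *m (cB *m us + sb) = phix &
        Phiu *m Z *m (cB *m us + sb) + us = phiu]).
Proof.
move=> Z cA cB sb; split.
  move=> K us hK M Phix phix Phiu phiu.
  have hN : slow (Z *m cA + Z *m cB *m K).
    apply: add_slow; first exact: mul_slow_low (Z_slow _ _ _) (cA_low _ _ _ _).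
    apply: mul_slow_low (hK); exact: mul_slow_low (Z_slow _ _ _) (cB_low _ _ _ _ _).
  have eM : M = 1%:M - (Z *m cA + Z *m cB *m K) by rewrite /M opprD addrA.
  have [U _] := inv_slow hN; rewrite -eM in U.
  have MP : M *m Phix = 1%:M by rewrite mulmxV.
  split => //.
    move=> w x u hx hu.
    have hMx : M *m x = w + Z *m (cB *m us + sb).
      rewrite /M !mulmxBl mul1mx {1}hx hu !mulmxDr !mulmxA.
      set a := Z *m cA *m x; set b := Z *m cB *m K *m x.
      by rewrite -!addrA hz.
    have hxx : x = Phix *m w + phix.
      by rewrite -{1}(mulKmx U x) hMx (mulmxDr (invmx M)) /phix /Phix mulmxA.
    split => //.
    by rewrite hu hxx mulmxDr /phiu /Phiu /phix !mulmxA addrA.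
  rewrite mul_row_col !mul_mx_row add_row_mx; congr row_mx.
    by rewrite /Phiu mulNmx !mulmxA -mulmxBl.
  set v := Z *m (cB *m us + sb).
  have ephix : phix = Phix *m v by rewrite /phix /v mulmxA.
  have ephiu : phiu = K *m Phix *m v + us by rewrite /phiu /Phiu /Phix /v -!mulmxA.
  have key : forall y : 'cV[R]_(n * T.+1), (1 - Z *m cA) *m (Phix *m y) - Z *m cB *m (K *m Phix *m y) = y.
    move=> y; rewrite !mulmxA -mulmxBl -mulmxBl.
    change (M *m Phix *m y = y); by rewrite MP mul1mx.
  rewrite ephix ephiu mulNmx mulmxDr opprD addrA key /v mulmxDr mulmxA.
  by rewrite addrAC subrr add0r.
move=> Phix Phiu phix phiu hPx hPu.
rewrite mul_row_col !mul_mx_row add_row_mx => /eq_row_mx [e1 e2].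
have hN : slow (- (Z *m (cA *m Phix + cB *m Phiu))).
  apply: opp_slow; apply: mul_slow_low (Z_slow _ _ _) _.
  apply: add_low; apply: mul_low => //; [exact: cA_low | exact: cB_low].
have ePx : Phix = 1%:M - - (Z *m (cA *m Phix + cB *m Phiu)).
  rewrite opprK -e1 mulmxBl mul1mx mulNmx mulmxDr !mulmxA.
  by rewrite hz2.
rewrite ePx in hPx.
have [U hinv] := inv_slow hN; rewrite -ePx in U hinv.
split => // K us M.
have PV : Phix *m invmx Phix = 1%:M by rewrite mulmxV.
have eK : K *m Phix = Phiu by rewrite /K mulmxKV.
have MP : M *m Phix = 1%:M.
  by rewrite -e1 /M !mulmxBl -(mulmxA _ K) eK mulNmx.
have [UM _] := mulmx1_unit MP.
have iM : invmx M = Phix by rewrite -[LHS]mulmx1 -MP mulKmx.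
have PM : Phix *m M = 1%:M by rewrite -iM mulVmx.
have hMp : M *m phix = Z *m cB *m us + Z *m sb.
  rewrite -e2 /M mulmxBl /us mulmxBr mulNmx -(mulmxA _ K).
  rewrite -/K; exact: hz3.
have hphix : Phix *m Z *m (cB *m us + sb) = phix.
  by rewrite -mulmxA mulmxDr mulmxA -hMp mulmxA PM mul1mx.
split => //.
- exact: mul_low hPu hinv.
- by rewrite iM eK.
- have -> : Phiu *m Z *m (cB *m us + sb) = K *m phix by rewrite -hphix -eK !mulmxA.
  rewrite /us -/K; exact: subrKC.
Qed.
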